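(* Let $h$ and $k$ be odd positive integers with $\gcd(h,k)=1$. Then $$kB_{1}(h,k)+hB_{1}(k,h)=\frac{1}{2}(h-1)(k-1).$$
   Context: $[x]$ denotes the greatest integer $\le x$. For integers $a,b$ with $b>0$ and $\gcd(a,b)=1$, define $$B_{1}(a,b)=\sum_{j=1}^{b-1}(-1)^{j+\left[\frac{aj}{b}\right]}\left[\frac{aj}{b}\right].$$ *)

(* Defs.v *)
From mathcomp Require Import all_boot all_order all_algebra.
Set Implicit Arguments. Unset Strict Implicit. Unset Printing Implicit Defensive.
Import Order.TTheory GRing.Theory Num.Theory.
Local Open Scope ring_scope.

(* B_1(a,b) = sum_{j=1}^{b-1} (-1)^(j + [aj/b]) [aj/b], for integers a, b > 0.
   [x] is the floor; for b > 0, floor(aj/b) = (a*j %/ b)%Z (intdiv rounds down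
   for positive divisor). *)
Definition B1 (a : int) (b : nat) : int :=
  \sum_(1 <= j < b)
    let q := ((a * j%:Z) %/ b%:Z)%Z in (-1) ^+ (j + `|q|)%N * q.

(* Main.v *)
Require Import Defs.
From mathcomp Require Import all_boot all_order all_algebra.
Import GRing.Theory Num.Theory.
Local Open Scope ring_scope.
From mathcomp Require Import zify ring.

Lemma perm_sum (g : nat -> int) h k b : coprime k h ->
  \sum_(0 <= u < h) g ((k*u+b) %% h)%N = \sum_(0 <= r < h) g r.
Proof.
case: h => [|h] cop; first by rewrite !big_geq.
rewrite !big_mkord.
have inj : injective (fun u : 'I_h.+1 => (Ordinal (ltn_pmod (k*u+b) (ltn0Sn h)))).
  have key: forall x y : nat, (x <= y)%N -> (y < h.+1)%N ->
      (k*x == k*y %[mod h.+1])%N -> x = y.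
    move=> x y xy yh; rewrite eq_sym eqn_mod_dvd ?leq_mul2l ?xy ?orbT //.
    rewrite -mulnBr Gauss_dvdr; last by rewrite coprime_sym.
    clear cop g.
    move/dvdnP=> [[|c] Hc]. 
      rewrite mul0n in Hc. apply/eqP; rewrite eqn_leq xy /=. by rewrite -subn_eq0 Hc.
    rewrite mulSn in Hc. 
    have : (h.+1 <= y - x)%N by rewrite Hc leq_addr.
    by move=> /leq_trans /(_ (leq_subr x y)); rewrite leqNgt yh.
  move=> u v /(congr1 val) /= /eqP; rewrite eqn_modDr => E; apply/val_inj => /=.
  case: (leqP u v) => uv; first exact: key.
  by symmetry; apply: key; [exact: ltnW | exact: ltn_ord | rewrite eq_sym].
by rewrite [RHS](reindex_inj inj).
Qed.

Lemma alt_sum p : \sum_(0 <= r < p.*2.+1) (-1) ^+ r = 1 :> int.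
Proof.
elim: p => [|p IH]; first by rewrite big_nat1.
rewrite doubleS (big_nat_recr p.*2.+2) // (big_nat_recr p.*2.+1) //= IH.
by rewrite (exprS _ p.*2.+1) mulN1r addrK.
Qed.

Lemma alt_sum2 p : \sum_(0 <= r < p.*2.+1) (-1) ^+ r * r%:Z = p%:Z.
Proof.
elim: p => [|p IH]; first by rewrite big_nat1.
rewrite doubleS (big_nat_recr p.*2.+2) // (big_nat_recr p.*2.+1) //= IH.
have s1 : (-1) ^+ (p.*2.+1) = -1 :> int by rewrite -signr_odd /= odd_double.
rewrite s1 (exprS _ p.*2.+1) s1.
rewrite -!addnn; lia.
Qed.

Lemma blocks (f : nat -> int) n a :
  \sum_(0 <= m < n*a) f m = \sum_(0 <= u < a) \sum_(0 <= b < n) f (n*u+b)%N.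
Proof.
elim: a => [|a IH]; first by rewrite muln0 !big_geq.
rewrite big_nat_recr //= -IH mulnS addnC (big_cat_nat (n := n*a)) ?leq_addr //=.
congr (_ + _).

rewrite -{1}(add0n (n*a)%N) big_addn addKn.
by apply: eq_bigr => i _; rewrite addnC.
Qed.

Definition F (h k m : nat) : int := (-1) ^+ (m %/ h + m %/ k).

Lemma F_mod h k m : odd h -> odd k -> F h k m = (-1) ^+ (m %% h + m %% k).
Proof.
move=> oh ok; rewrite /F -signr_odd -[in RHS]signr_odd; congr (_ ^+ _).
have e1 := congr1 odd (divn_eq m h); have e2 := congr1 odd (divn_eq m k).
rewrite !oddD !oddM oh ok !andbT in e1 e2 *.
move: e1 e2; case: (odd m); case: (odd (m %/ h)); case: (odd (m %/ k));
  case: (odd (m %% h)); case: (odd (m %% k)) => //.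
Qed.

Lemma F_sym h k m : F h k m = F k h m.
Proof. by rewrite /F addnC. Qed.

Lemma odd_ex n : odd n -> exists p, n = p.*2.+1.
Proof. move=> o; exists n./2; rewrite -{1}(odd_double_half n) o. by rewrite addnC addn1. Qed.

Lemma sumF h k : odd h -> odd k -> coprime h k ->
  \sum_(0 <= m < h*k) F h k m = 1.
Proof.
move=> oh ok cop; rewrite mulnC blocks.
rewrite (eq_big_nat _ _ (F2 := fun u => \sum_(0 <= b < k) (-1) ^+ ((k*u+b) %% h)%N * (-1) ^+ b)); last first.
  move=> u _; apply: eq_big_nat => b /andP[_ bk].
  have Hb : ((k*u+b) %% k = b)%N by rewrite mulnC modnMDl modn_small.
  by rewrite F_mod // exprD Hb.
rewrite exchange_big_nat /=.
rewrite (eq_big_nat _ _ (F2 := fun b => (-1) ^+ b)); last first.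
  move=> b _; rewrite -big_distrl /=.
  rewrite (perm_sum (fun r => (-1) ^+ r)); last by rewrite coprime_sym.
  by have [p ->] := odd_ex _ oh; rewrite alt_sum mul1r.
by have [p ->] := odd_ex _ ok; rewrite alt_sum.
Qed.

Lemma dF h k m : coprime h k -> (0 < h)%N -> (0 < k)%N -> (0 < m)%N -> (m < h * k)%N ->
  F h k m - F h k m.-1 = 2 * F h k m * ((h %| m) + (k %| m))%N%:Z.
Proof.
move=> cop hp kp; case: m => [//|n] _ lt.
have nb : ~~ ((h %| n.+1)%N && (k %| n.+1)%N).
  by rewrite -div.Gauss_dvd //; apply/negP => /(dvdn_leq (ltn0Sn n)); rewrite leqNgt lt.
rewrite /F /= !divnS //.
move: nb; case: (h %| n.+1)%N; case: (k %| n.+1)%N => //= _.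
- rewrite add0n add1n addSn exprS mulN1r; lia.
- rewrite !add0n add1n addnS exprS mulN1r; lia.
- rewrite !add0n; lia.
Qed.

Lemma sbp (G : nat -> int) n :
  \sum_(0 <= m < n.+1) m%:Z * (G m - G m.-1) = n%:Z * G n - \sum_(0 <= m < n) G m.
Proof.
elim: n => [|n IH]; first by rewrite big_nat1 big_geq // !mul0r subr0.
rewrite big_nat_recr // IH big_nat_recr //= -[n.+1]addn1 PoszD; ring.
Qed.

Lemma sum_dvd (f : nat -> int) h k : (0 < h)%N ->
  \sum_(0 <= m < h*k) f m * (h %| m)%N%:Z = \sum_(0 <= j < k) f (h*j)%N.
Proof.
move=> hp; rewrite blocks; apply: eq_big_nat => j _.
rewrite big_ltn // addn0 dvdn_mulr // mulr1.
rewrite (eq_big_nat _ _ (F2 := fun _ => 0)) ?big1_eq ?addr0 //.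
move=> b /andP[b1 bh]; rewrite dvdn_addr ?dvdn_mulr // gtnNdvd //.
by rewrite mulr0.
Qed.

Lemma B1_nat h k : (0 < k)%N -> B1 h%:Z k =
  \sum_(0 <= j < k) (-1) ^+ (j + h*j %/ k)%N * ((h*j) %/ k)%N%:Z.
Proof.
move=> kp; rewrite /B1 [RHS](big_ltn kp) muln0 div0n mulr0 add0r.
by apply: eq_big_nat => j _; rewrite -PoszM divz_nat.
Qed.

Lemma Xsum h k p : odd h -> odd k -> coprime h k -> k = p.*2.+1 ->
  \sum_(0 <= j < k) (h*j)%N%:Z * F h k (h*j)%N = k%:Z * B1 h%:Z k + p%:Z.
Proof.
move=> oh ok cop kE.
have hp : (0 < h)%N by case: h oh {cop}.
have kp : (0 < k)%N by rewrite kE.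
rewrite B1_nat // big_distrr /= -(alt_sum2 p) -kE.
rewrite -(perm_sum (fun r => (-1) ^+ r * r%:Z) k h 0 cop) -big_split /=.
apply: eq_big_nat => j _.
rewrite {1}(divn_eq (h*j) k) PoszD mulrDl addn0; congr (_ + _).
  by rewrite /F mulKn // PoszM; ring.
by rewrite F_mod // modnMr add0n mulrC.
Qed.

Lemma predmul a b : ((a.*2.+1 * b.*2.+1).-1 = b.*2 * a.*2.+1 + a.*2)%N.
Proof. rewrite mulSn addSn /= !mulnS [(b.*2 * a.*2)%N]mulnC; lia. Qed.

Theorem theorem15 (h k : nat) :
  (0 < h)%N -> (0 < k)%N -> odd h -> odd k -> coprime h k ->
  ((k%:Z * B1 h%:Z k + h%:Z * B1 k%:Z h)%:~R : rat)
    = 1 / 2 * ((h%:R - 1) * (k%:R - 1)).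
Proof.
move=> hp kp oh ok cop.
have [ph hE] := odd_ex _ oh; have [pk kE] := odd_ex _ ok.
set N := (h*k)%N.
have Np : (0 < N)%N by rewrite muln_gt0 hp kp.
have FN : F h k N.-1 = 1.
  rewrite F_mod // -signr_odd oddD.
  have e1 : (N.-1 %% h = ph.*2)%N.
    have -> : (N.-1 = pk.*2 * h + ph.*2)%N by rewrite /N hE kE predmul.
    by rewrite modnMDl modn_small // hE.
  have e2 : (N.-1 %% k = pk.*2)%N.
    have -> : (N.-1 = ph.*2 * k + pk.*2)%N by rewrite /N hE kE mulnC predmul.
    by rewrite modnMDl modn_small // kE.
  by rewrite e1 e2 !odd_double.
have S1 : \sum_(0 <= m < N.-1) F h k m = 0.
  have := sumF _ _ oh ok cop; rewrite -/N -(prednK Np) big_nat_recr //= FN.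
  by move/(congr1 (fun x => x - 1)); rewrite addrK subrr.
have main := sbp (F h k) N.-1.
rewrite prednK // S1 FN subr0 mulr1 in main.
rewrite (eq_big_nat _ _ (F2 := fun m => 2 * ((m%:Z * F h k m) * (h %| m)%N%:Z
   + (m%:Z * F h k m) * (k %| m)%N%:Z))) in main; last first.
  move=> [|m] /andP[_ mN]; first by rewrite !mul0r mulr0.
  rewrite dF // PoszD; ring.
rewrite -big_distrr /= big_split /= sum_dvd // in main.
have T2 : \sum_(0 <= m < N) (m%:Z * F h k m) * (k %| m)%N%:Z =
    \sum_(0 <= j < h) (k*j)%N%:Z * F k h (k*j)%N.
  rewrite /N mulnC sum_dvd //; apply: eq_big_nat => j _; by rewrite F_sym.
have cop2 : coprime k h by rewrite coprime_sym.
rewrite T2 (Xsum h k pk oh ok cop kE) (Xsum k h ph ok oh cop2 hE) in main.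
have key : k%:Z * B1 h%:Z k + h%:Z * B1 k%:Z h = (2 * ph * pk)%N%:Z.
  move: main; rewrite /N hE kE predmul.
  move: (_ * B1 _ _) (_ * B1 _ _) => X Y.
  rewrite -!addnn; lia.
rewrite key hE kE.
rewrite -[ph.*2.+1]addn1 -[pk.*2.+1]addn1 -!muln2.
rewrite -natz mulrz_nat !natrD !natrM.
field.
by [].
Qed.
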